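(* Let $\lambda$ be an infinite cardinal, $\theta$ an infinite regular cardinal and $\chi$ either $2$ or an infinite cardinal. Suppose that $m(\lambda,\lambda,\theta,\chi)=\lambda$. Then for every map $d:\lambda^+\times\lambda^+\to\lambda$, $A(d)\cap E^{\lambda^+}_\theta\in J_\chi[\lambda^+]$.
   Context: $E^\kappa_\theta=\{\alpha<\kappa\mid\mathrm{cf}(\alpha)=\theta\}$. For a map $d:\delta\times\kappa\to\lambda$, $A(d)$ is the set of all $\alpha<\kappa$ such that for every cofinal $B\subseteq\alpha$ there exist $\eta\in\delta\cap\alpha$ and a cofinal $B'\subseteq B$ on which $\beta\mapsto d(\eta,\beta)$ is injective. $m(\lambda,\lambda,\theta,\chi)$ is the least size of a family $\mathcal H$ of functions from $\lambda$ to $[\lambda]^{<\chi}$ such that for every $X\in[\lambda]^\theta$ and every $g:X\to\lambda$ there is $h\in\mathcal H$ with $|\{\xi\in X\mid g(\xi)\in h(\xi)\}|=\theta$. For regular uncountable $\kappa$, $J_\chi[\kappa]$ is the collection of all $S\subseteq\kappa$ for which there exist a club $C\subseteq\kappa$ and functions $f_i:\kappa\to[\kappa]^{<\chi}$ ($i<\kappa$) such that for every $\alpha\in S\cap C$, every regressive $f:\alpha\to\alpha$ and every cofinal $B\subseteq\alpha$, there is $i<\alpha$ with $\sup\{\beta\in B\mid f(\beta)\in f_i(\beta)\}=\alpha$. *)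

(* Defs.v *)
Set Implicit Arguments.

Definition le_card (A B : Type) : Prop :=
  exists f : A -> B, forall x y, f x = f y -> x = y.

Definition eq_card (A B : Type) : Prop :=
  exists f : A -> B, (forall x y, f x = f y -> x = y) /\ (forall y, exists x, f x = y).

Definition infinite (A : Type) : Prop := le_card nat A.

Definition strict_well_order {T : Type} (lt : T -> T -> Prop) : Prop :=
  well_founded lt /\
  (forall x y z, lt x y -> lt y z -> lt x z) /\
  (forall x, ~ lt x x) /\
  (forall x y, lt x y \/ x = y \/ lt y x).

Section Ord.
Context {K : Type} (lt : K -> K -> Prop).

Definition le x y := x = y \/ lt x y.

Definition cofinal_in (alpha : K) (B : K -> Prop) : Prop :=
  (forall b, B b -> lt b alpha) /\
  (forall g, lt g alpha -> exists b, B b /\ le g b).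

Definition sup_eq (alpha : K) (X : K -> Prop) : Prop :=
  (forall x, X x -> le x alpha) /\
  (forall d, lt d alpha -> exists x, X x /\ lt d x).

Definition cf_eq (alpha : K) (Theta : Type) : Prop :=
  (exists B, cofinal_in alpha B /\ eq_card {b | B b} Theta) /\
  (forall B, cofinal_in alpha B -> le_card Theta {b | B b}).

Definition is_zero (b : K) : Prop := forall g, ~ lt g b.

Definition regressive_on (alpha : K) (f : K -> K) : Prop :=
  forall b, lt b alpha -> lt (f b) alpha /\ (is_zero b \/ lt (f b) b).

Definition club (C : K -> Prop) : Prop :=
  (forall g, exists b, C b /\ le g b) /\
  (forall alpha, ~ is_zero alpha ->
     sup_eq alpha (fun b => C b /\ lt b alpha) -> C alpha).

Definition small_chi {T : Type} (Chi : Type) (S : T -> Prop) : Prop :=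
  ~ le_card Chi {x | S x}.

(* A(d) for d : K x K -> L  (here delta = kappa = K) *)
Definition in_A {L : Type} (d : K -> K -> L) (alpha : K) : Prop :=
  forall B, cofinal_in alpha B ->
    exists eta, lt eta alpha /\
      exists B', (forall b, B' b -> B b) /\ cofinal_in alpha B' /\
        (forall b1 b2, B' b1 -> B' b2 -> d eta b1 = d eta b2 -> b1 = b2).

Definition in_J (Chi : Type) (S : K -> Prop) : Prop :=
  exists C, club C /\
  exists F : K -> K -> (K -> Prop),
    (forall i b, small_chi Chi (F i b)) /\
    (forall alpha, S alpha -> C alpha ->
       forall f : K -> K, regressive_on alpha f ->
       forall B, cofinal_in alpha B ->
         exists i, lt i alpha /\
           sup_eq alpha (fun b => B b /\ F i b (f b))).
End Ord.

(* K (with lt) is the cardinal lambda^+ where lambda = |L| *)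
Definition is_succ_card (L K : Type) (lt : K -> K -> Prop) : Prop :=
  strict_well_order lt /\
  (forall a : K, le_card {b | lt b a} L) /\
  ~ le_card K L.

Definition regular_infinite_card (Theta : Type) (lt : Theta -> Theta -> Prop) : Prop :=
  infinite Theta /\ strict_well_order lt /\
  (forall a : Theta, ~ le_card Theta {b | lt b a}) /\
  (forall X : Theta -> Prop,
     (forall g, exists x, X x /\ (x = g \/ lt g x)) -> le_card Theta {x | X x}).

Definition chi_ok (Chi : Type) : Prop := eq_card Chi bool \/ infinite Chi.

(* H is a family witnessing the definition of m(lambda,lambda,theta,chi) *)
Definition m_good {L : Type} (Theta Chi : Type) (H : (L -> (L -> Prop)) -> Prop) : Prop :=
  (forall h, H h -> forall xi, small_chi Chi (h xi)) /\
  (forall (X : L -> Prop) (g : L -> L), eq_card {x | X x} Theta ->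
     exists h, H h /\ eq_card {xi | X xi /\ h xi (g xi)} Theta).

Definition m_eq_lambda (L Theta Chi : Type) : Prop :=
  (exists H : (L -> (L -> Prop)) -> Prop, m_good Theta Chi H /\ eq_card {h | H h} L) /\
  (forall H : (L -> (L -> Prop)) -> Prop, m_good Theta Chi H -> le_card L {h | H h}).

(* Main.v *)
Require Import Defs.
From Stdlib Require Import Classical ClassicalEpsilon ProofIrrelevance FunctionalExtensionality Cantor.
From mathcomp Require ssreflect ssrbool boolp classical_sets.

Module ZornW.
Import ssreflect ssrbool boolp classical_sets.
Local Open Scope classical_set_scope.
Lemma zorn_sets (T : Type) (P : (T -> Prop) -> Prop) :
  (forall F : (T->Prop) -> Prop, (forall X, F X -> P X) ->
     (forall X Y, F X -> F Y -> (forall t, X t -> Y t) \/ (forall t, Y t -> X t)) ->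
     P (fun t => exists X, F X /\ X t)) ->
  exists A, P A /\ forall B, (forall t, A t -> B t) -> P B -> forall t, B t -> A t.
Proof.
move=> H.
have H' : forall F : set (set T), F `<=` P -> total_on F subset ->
      P (\bigcup_(X in F) X).
  move=> F FP Ftot.
  have -> : (\bigcup_(X in F) X) = (fun t => exists X, F X /\ X t).
    apply: funext => t; apply: propext; split.
    + by case=> X FX Xt; exists X.
    + by case=> X [FX Xt]; exists X.
  apply: H; first exact: FP.
  move=> X Y FX FY; case: (Ftot X Y FX FY) => h; [left|right]; move=> t; apply: h.
have [A [PA Amax]] := Zorn_bigcup H'.
exists A; split => // B AB PB t Bt.
apply: NNPP => nAt; apply: (Amax B) => //; split => //.
by move=> BA; apply: nAt; apply: BA.
Qed.
End ZornW.

Definition cid {A : Type} {P : A -> Prop} (H : exists x, P x) : {x | P x} :=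
  constructive_indefinite_description P H.

Lemma le_card_refl (A : Type) : le_card A A.
Proof. exists (fun x => x); auto. Qed.

Lemma le_card_trans (A B C : Type) : le_card A B -> le_card B C -> le_card A C.
Proof.
  intros [f Hf] [g Hg]. exists (fun x => g (f x)). intros x y E; auto.
Qed.

Lemma le_card_prod (A A' B B' : Type) : le_card A A' -> le_card B B' -> le_card (A*B) (A'*B').
Proof.
  intros [f Hf] [g Hg]. exists (fun p => (f (fst p), g (snd p))).
  intros [x1 x2] [y1 y2] E. simpl in E. injection E; intros E2 E1.
  rewrite (Hf _ _ E1), (Hg _ _ E2). reflexivity.
Qed.

Lemma card_compare (X Y : Type) : le_card X Y \/ le_card Y X.
Proof.
  set (P := fun S : X * Y -> Prop =>
    (forall x y y', S (x,y) -> S (x,y') -> y = y') /\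
    (forall x x' y, S (x,y) -> S (x',y) -> x = x')).
  destruct (ZornW.zorn_sets _ P) as [A [[Af Ai] Amax]].
  { intros F FP Ftot. split.
    - intros x y y' [X1 [F1 H1]] [X2 [F2 H2]].
      destruct (Ftot X1 X2 F1 F2) as [S|S].
      + apply (proj1 (FP X2 F2) x); auto.
      + apply (proj1 (FP X1 F1) x); auto.
    - intros x x' y [X1 [F1 H1]] [X2 [F2 H2]].
      destruct (Ftot X1 X2 F1 F2) as [S|S].
      + apply (proj2 (FP X2 F2) x x' y); auto.
      + apply (proj2 (FP X1 F1) x x' y); auto. }
  destruct (classic (forall x, exists y, A (x,y))) as [Hx|Hx].
  { left. exists (fun x => proj1_sig (cid (Hx x))).
    intros x x' E. destruct (cid (Hx x)) as [y Hy]; destruct (cid (Hx x')) as [y' Hy'].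
    simpl in E; subst. eauto. }
  destruct (classic (forall y, exists x, A (x,y))) as [Hy|Hy].
  { right. exists (fun y => proj1_sig (cid (Hy y))).
    intros y y' E. destruct (cid (Hy y)) as [x Hx1]; destruct (cid (Hy y')) as [x' Hx'].
    simpl in E; subst. eauto. }
  exfalso.
  apply not_all_ex_not in Hx. destruct Hx as [x0 Hx0].
  apply not_all_ex_not in Hy. destruct Hy as [y0 Hy0].
  assert (H0 : A (x0,y0)).
  { apply (Amax (fun p => A p \/ p = (x0,y0))); auto.
    split.
    - intros x y y' [H1|H1] [H2|H2]; try congruence; eauto.
      + injection H2; intros; subst. exfalso; apply Hx0; eauto.
      + injection H1; intros; subst. exfalso; apply Hx0; eauto.
    - intros x x' y [H1|H1] [H2|H2]; try congruence; eauto.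
      + injection H2; intros; subst. exfalso; apply Hy0; eauto.
      + injection H1; intros; subst. exfalso; apply Hy0; eauto. }
  apply Hx0; eauto.
Qed.

Definition hD {T} (S : T + ((T*T)*T) -> Prop) x := S (inl x).
Definition hG {T} (S : T + ((T*T)*T) -> Prop) x y z := S (inr ((x,y),z)).
Definition hvalid {T} (S : T + ((T*T)*T) -> Prop) :=
  (forall x y z z', hG S x y z -> hG S x y z' -> z = z') /\
  (forall x y x' y' z, hG S x y z -> hG S x' y' z -> x = x' /\ y = y') /\
  (forall x y z, hG S x y z -> hD S x /\ hD S y /\ hD S z) /\
  (forall x y, hD S x -> hD S y -> exists z, hG S x y z).

Lemma to_nat_inj a b a' b' : Cantor.to_nat (a,b) = Cantor.to_nat (a',b') -> a = a' /\ b = b'.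
Proof.
  intro E. assert (E2 := f_equal Cantor.of_nat E). rewrite !Cantor.cancel_of_to in E2.
  injection E2; auto.
Qed.

Lemma hvalid_union {T} (F : (T + ((T*T)*T) -> Prop) -> Prop) :
  (forall X, F X -> hvalid X) ->
  (forall X Y, F X -> F Y -> (forall t, X t -> Y t) \/ (forall t, Y t -> X t)) ->
  hvalid (fun t => exists X, F X /\ X t).
Proof.
  intros FP Ftot. unfold hvalid, hG, hD.
  split; [|split; [|split]].
  - intros x y z z' [X1 [F1 H1]] [X2 [F2 H2]].
    destruct (Ftot X1 X2 F1 F2) as [S|S].
    + apply (proj1 (FP X2 F2) x y); unfold hG; auto.
    + apply (proj1 (FP X1 F1) x y); unfold hG; auto.
  - intros x y x' y' z [X1 [F1 H1]] [X2 [F2 H2]].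
    destruct (Ftot X1 X2 F1 F2) as [S|S].
    + apply (proj1 (proj2 (FP X2 F2)) x y x' y' z); unfold hG; auto.
    + apply (proj1 (proj2 (FP X1 F1)) x y x' y' z); unfold hG; auto.
  - intros x y z [X1 [F1 H1]].
    destruct (proj1 (proj2 (proj2 (FP X1 F1))) x y z H1) as [a [b c]].
    split; [|split]; exists X1; auto.
  - intros x y [X1 [F1 H1]] [X2 [F2 H2]].
    destruct (Ftot X1 X2 F1 F2) as [S|S].
    + destruct (proj2 (proj2 (proj2 (FP X2 F2))) x y) as [z Hz]; unfold hD; auto.
      exists z, X2; auto.
    + destruct (proj2 (proj2 (proj2 (FP X1 F1))) x y) as [z Hz]; unfold hD; auto.
      exists z, X1; auto.
Qed.

Lemma hessenberg (T : Type) : infinite T -> le_card (T*T) T.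
Proof.
  intros [e He].
  set (S0 := fun s : T + ((T*T)*T) => match s with
         | inl x => exists n, x = e n
         | inr ((x,y),z) => exists a b, x = e a /\ y = e b /\ z = e (Cantor.to_nat (a,b)) end).
  assert (S0v : hvalid S0).
  { unfold hvalid, hG, hD, S0. split; [|split; [|split]].
    - intros x y z z' [a [b [-> [-> ->]]]] [a' [b' [E1 [E2 ->]]]].
      apply He in E1; apply He in E2; subst; auto.
    - intros x y x' y' z [a [b [-> [-> ->]]]] [a' [b' [-> [-> E]]]].
      apply He in E. apply to_nat_inj in E. destruct E; subst; auto.
    - intros x y z [a0 [b0 [-> [-> ->]]]]. repeat split; eexists; reflexivity.
    - intros x y [a0 ->] [b0 ->]. exists (e (Cantor.to_nat (a0,b0))), a0, b0; auto. }
  set (P := fun S => hvalid S /\ ((forall t, ~ S t) \/ (forall t, S0 t -> S t))).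
  destruct (ZornW.zorn_sets _ P) as [A [[Av Aor] Amax]].
  { intros F FP Ftot. split.
    - apply hvalid_union; auto. intros X FX; apply (FP X FX).
    - destruct (classic (exists X t, F X /\ X t)) as [[X [t [FX Xt]]]|N].
      + right. destruct (proj2 (FP X FX)) as [Hn|Hs].
        * exfalso; apply (Hn t Xt).
        * intros t' Ht'. exists X; auto.
      + left. intros t [X [FX Xt]]. apply N; eauto. }
  assert (AS0 : forall t, S0 t -> A t).
  { destruct Aor as [Hn|Hs]; auto.
    intros t Ht. apply (Amax S0); auto.
    - intros t' At'. exfalso; apply (Hn t' At').
    - split; auto. }
  destruct Av as [AF [AI [AR AT]]].
  assert (De : forall n, hD A (e n)). { intro n. apply AS0. simpl. eauto. }
  set (pc := fun x y => match excluded_middle_informative (exists z, hG A x y z) with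
                        | left H => proj1_sig (cid H) | right _ => x end).
  assert (pcG : forall x y, hD A x -> hD A y -> hG A x y (pc x y)).
  { intros x y Hx Hy. unfold pc. destruct excluded_middle_informative as [H|H].
    - destruct (cid H); simpl; auto.
    - exfalso; apply H; auto. }
  assert (pcD : forall x y, hD A x -> hD A y -> hD A (pc x y)).
  { intros x y Hx Hy. apply (AR x y). auto. }
  assert (pcI : forall x y x' y', hD A x -> hD A y -> hD A x' -> hD A y' ->
             pc x y = pc x' y' -> x = x' /\ y = y').
  { intros x y x' y' Hx Hy Hx' Hy' E. apply (AI x y x' y' (pc x y)); auto.
    rewrite E; auto. }
  assert (Main : exists m : T -> T, (forall x y, m x = m y -> x = y) /\ forall x, hD A (m x)).
  { apply NNPP; intro Nm.
    destruct (card_compare {x | hD A x} {x | ~ hD A x}) as [[k Hk]|[r Hr]].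
    -
      set (k' := fun x => match excluded_middle_informative (hD A x) with
                          | left H => proj1_sig (k (exist _ x H)) | right _ => x end).
      assert (k'D : forall x, hD A x -> ~ hD A (k' x)).
      { intros x Hx. unfold k'. destruct excluded_middle_informative as [H|H]; [|tauto].
        destruct (k (exist _ x H)); simpl; auto. }
      assert (k'I : forall x y, hD A x -> hD A y -> k' x = k' y -> x = y).
      { intros x y Hx Hy. unfold k'.
        destruct excluded_middle_informative as [H|H]; [|tauto].
        destruct excluded_middle_informative as [H'|H']; [|tauto].
        destruct (k (exist _ x H)) as [kx Hkx] eqn:Ex; destruct (k (exist _ y H')) as [ky Hky] eqn:Ey; simpl.
        intro E; subst ky. rewrite (proof_irrelevance _ Hky Hkx) in Ey. rewrite <- Ey in Ex.
        apply Hk in Ex. injection Ex; auto. }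
      set (c1 := e 0). set (c2 := e 1). set (c3 := e 2).
      assert (c12 : c1 <> c2) by (intro E; apply He in E; discriminate).
      assert (c13 : c1 <> c3) by (intro E; apply He in E; discriminate).
      assert (c23 : c2 <> c3) by (intro E; apply He in E; discriminate).
      set (E' := fun x y u v t =>
         (hD A x /\ hD A v /\ y = k' v /\ u = x /\ t = c1) \/
         (hD A u /\ x = k' u /\ hD A y /\ v = y /\ t = c2) \/
         (hD A u /\ hD A v /\ x = k' u /\ y = k' v /\ t = c3)).
      set (N := fun x y z => exists u v t, E' x y u v t /\ z = k' (pc (pc u v) t)).
      set (A' := fun s : T + ((T*T)*T) => match s with
                   | inl x => hD A x \/ exists v, hD A v /\ x = k' v
                   | inr ((x,y),z) => hG A x y z \/ N x y z end).
      assert (E'D : forall x y u v t, E' x y u v t -> hD A u /\ hD A v /\ hD A t).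
      { intros x y u v t [[? [? [? [? ?]]]]|[[? [? [? [? ?]]]]|[? [? [? [? ?]]]]]]; subst;
        unfold c1, c2, c3; auto. }
      assert (NE : forall x y z, N x y z -> ~ hD A x \/ ~ hD A y).
      { intros x y z [u [v [t [[[? [? [? [? ?]]]]|[[? [? [? [? ?]]]]|[? [? [? [? ?]]]]]] _]]]]; subst; auto. }
      Ltac kcontra k'D := try (match goal with H : hD _ (?k ?v), H' : hD _ ?v |- _ => exfalso; exact (k'D v H' H) end).
      assert (A'v : hvalid A').
      { unfold hvalid. split; [|split; [|split]].
        - intros x y z z' H1 H2.
          change (hG A x y z \/ N x y z) in H1. change (hG A x y z' \/ N x y z') in H2.
          destruct H1 as [H1|H1]; destruct H2 as [H2|H2].
          + eauto.
          + exfalso. destruct (AR _ _ _ H1) as [Dx [Dy _]].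
            destruct (NE _ _ _ H2); auto.
          + exfalso. destruct (AR _ _ _ H2) as [Dx [Dy _]].
            destruct (NE _ _ _ H1); auto.
          + destruct H1 as [u [v [t [HE ->]]]]. destruct H2 as [u' [v' [t' [HE' ->]]]].
            assert (u = u' /\ v = v' /\ t = t') as [-> [-> ->]]; [|reflexivity].
            destruct HE as [[? [? [? [? ?]]]]|[[? [? [? [? ?]]]]|[? [? [? [? ?]]]]]];
            destruct HE' as [[? [? [? [? ?]]]]|[[? [? [? [? ?]]]]|[? [? [? [? ?]]]]]];
            subst; kcontra k'D; repeat split; auto; apply k'I; auto.
        - intros x y x' y' z H1 H2.
          change (hG A x y z \/ N x y z) in H1. change (hG A x' y' z \/ N x' y' z) in H2.
          destruct H1 as [H1|H1]; destruct H2 as [H2|H2].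
          + eauto.
          + exfalso. destruct (AR _ _ _ H1) as [_ [_ Dz]].
            destruct H2 as [u [v [t [HE Ez]]]]. destruct (E'D _ _ _ _ _ HE) as [? [? ?]].
            rewrite Ez in Dz. eapply k'D; [|exact Dz]. auto.
          + exfalso. destruct (AR _ _ _ H2) as [_ [_ Dz]].
            destruct H1 as [u [v [t [HE Ez]]]]. destruct (E'D _ _ _ _ _ HE) as [? [? ?]].
            rewrite Ez in Dz. eapply k'D; [|exact Dz]. auto.
          + destruct H1 as [u [v [t [HE Ez]]]]. destruct H2 as [u' [v' [t' [HE' Ez']]]].
            destruct (E'D _ _ _ _ _ HE) as [? [? ?]]. destruct (E'D _ _ _ _ _ HE') as [? [? ?]].
            rewrite Ez' in Ez. apply k'I in Ez; auto.
            apply pcI in Ez; auto. destruct Ez as [Ez ->].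
            apply pcI in Ez; auto. destruct Ez as [-> ->].
            destruct HE as [[? [? [? [? ?]]]]|[[? [? [? [? ?]]]]|[? [? [? [? ?]]]]]];
            destruct HE' as [[? [? [? [? ?]]]]|[[? [? [? [? ?]]]]|[? [? [? [? ?]]]]]];
            subst; try congruence; auto.
        - intros x y z H1.
          change (hG A x y z \/ N x y z) in H1.
          change ((hD A x \/ exists v, hD A v /\ x = k' v) /\ (hD A y \/ exists v, hD A v /\ y = k' v) /\ (hD A z \/ exists v, hD A v /\ z = k' v)).
          destruct H1 as [H1|H1].
          + destruct (AR _ _ _ H1) as [? [? ?]]. auto.
          + destruct H1 as [u [v [t [HE ->]]]]. destruct (E'D _ _ _ _ _ HE) as [? [? ?]].
            split; [|split]; [| |right; exists (pc (pc u v) t); auto].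
            * destruct HE as [[? [? [? [? ?]]]]|[[? [? [? [? ?]]]]|[? [? [? [? ?]]]]]]; subst; eauto.
            * destruct HE as [[? [? [? [? ?]]]]|[[? [? [? [? ?]]]]|[? [? [? [? ?]]]]]]; subst; eauto.
        - intros x y Hx Hy.
          change (hD A x \/ exists v, hD A v /\ x = k' v) in Hx.
          change (hD A y \/ exists v, hD A v /\ y = k' v) in Hy.
          change (exists z, hG A x y z \/ N x y z).
          destruct Hx as [Hx|[v [Hv ->]]]; destruct Hy as [Hy|[w [Hw ->]]].
          + destruct (AT x y Hx Hy) as [z Hz]. eauto.
          + eexists. right. exists x, w, c1. split; [|reflexivity]. left; auto.
          + eexists. right. exists v, y, c2. split; [|reflexivity]. right; left; auto.
          + eexists. right. exists v, w, c3. split; [|reflexivity]. right; right; auto 10. }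
      assert (AA' : forall t, A t -> A' t).
      { intros [x|[[x y] z]] H; simpl; left; exact H. }
      assert (Hc : A' (inl (k' c1))). { simpl. right. exists c1. split; auto. apply De. }
      apply (k'D c1); [apply De|].
      apply (Amax A' AA'); auto.
      split; auto.
    -
      apply Nm.
      set (r' := fun x => match excluded_middle_informative (hD A x) with
                          | left _ => pc x (e 0)
                          | right H => pc (proj1_sig (r (exist _ x H))) (e 1) end).
      exists r'. split.
      + intros x y. unfold r'.
        destruct excluded_middle_informative as [H|H];
        destruct excluded_middle_informative as [H'|H'].
        * intro E. apply pcI in E; auto; tauto.
        * destruct (r (exist _ y H')) as [ry Hry] eqn:Ery; simpl.
          intro E. apply pcI in E; auto. destruct E as [_ E]. apply He in E; discriminate.
        * destruct (r (exist _ x H)) as [rx Hrx] eqn:Erx; simpl.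
          intro E. apply pcI in E; auto. destruct E as [_ E]. apply He in E; discriminate.
        * destruct (r (exist _ x H)) as [rx Hrx] eqn:Erx; simpl.
          destruct (r (exist _ y H')) as [ry Hry] eqn:Ery; simpl.
          intro E. apply pcI in E; auto. destruct E as [E _]. subst ry.
          rewrite (proof_irrelevance _ Hry Hrx) in Ery. rewrite <- Ery in Erx.
          apply Hr in Erx. injection Erx; auto.
      + intro x. unfold r'. destruct excluded_middle_informative as [H|H].
        * apply pcD; auto.
        * destruct (r (exist _ x H)) as [rx Hrx]; simpl. apply pcD; auto. }
  destruct Main as [m [Hm HmD]].
  exists (fun p => pc (m (fst p)) (m (snd p))).
  intros [x y] [x' y'] E. simpl in E. apply pcI in E; auto.
  destruct E as [E1 E2]. apply Hm in E1; apply Hm in E2. subst; auto.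
Qed.

Lemma CB (A B : Type) : le_card A B -> le_card B A -> eq_card A B.
Proof.
  intros [f Hf] [g Hg].
  set (C := fun a => forall Z : A -> Prop, (forall a, (~ exists b, g b = a) -> Z a) ->
                       (forall a, Z a -> Z (g (f a))) -> Z a).
  assert (Cbase : forall a, (~ exists b, g b = a) -> C a).
  { intros a Ha Z H1 H2. auto. }
  assert (Cstep : forall a, C a -> C (g (f a))).
  { intros a Ca Z H1 H2. apply H2. apply Ca; auto. }
  assert (Cinv : forall x, C x -> (~ exists b, g b = x) \/ exists a, C a /\ x = g (f a)).
  { intros x Cx.
    assert (Hz : C x /\ ((~ exists b, g b = x) \/ exists a, C a /\ x = g (f a))).
    { apply Cx.
      - intros a Ha. split; auto.
      - intros a [Ca _]. split; auto. right. exists a; auto. }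
    tauto. }
  set (h := fun a => match excluded_middle_informative (C a) with
            | left _ => f a
            | right H => match excluded_middle_informative (exists b, g b = a) with
                         | left E => proj1_sig (cid E) | right _ => f a end end).
  exists h. split.
  - intros a a'. unfold h.
    destruct (excluded_middle_informative (C a)) as [Ca|Ca];
    destruct (excluded_middle_informative (C a')) as [Ca'|Ca'].
    + apply Hf.
    + destruct excluded_middle_informative as [E|E]; [|exfalso; apply Ca'; apply Cbase; auto].
      destruct (cid E) as [b Hb]; simpl. intro Eb. subst b. subst a'.
      exfalso; apply Ca'; apply Cstep; auto.
    + destruct excluded_middle_informative as [E|E]; [|exfalso; apply Ca; apply Cbase; auto].
      destruct (cid E) as [b Hb]; simpl. intro Eb. subst b. subst a.
      exfalso; apply Ca; apply Cstep; auto.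
    + destruct excluded_middle_informative as [E|E]; [|exfalso; apply Ca; apply Cbase; auto].
      destruct excluded_middle_informative as [E'|E']; [|exfalso; apply Ca'; apply Cbase; auto].
      destruct (cid E) as [b Hb]; destruct (cid E') as [b' Hb']; simpl.
      intro; subst; auto.
  - intro b. destruct (classic (C (g b))) as [Cg|Cg].
    + destruct (Cinv _ Cg) as [N|[a [Ca Ea]]].
      * exfalso; apply N; eauto.
      * exists a. unfold h. destruct excluded_middle_informative as [_|N]; [|tauto].
        apply Hg. auto.
    + exists (g b). unfold h. destruct excluded_middle_informative as [N|_]; [tauto|].
      destruct excluded_middle_informative as [E|E]; [|exfalso; apply E; eauto].
      destruct (cid E) as [b' Hb']; simpl. auto.
Qed.

Lemma opt_le (A L : Type) : le_card (L*L) L -> (exists a b : L, a <> b) ->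
  le_card A L -> le_card (option A) L.
Proof.
  intros [p Hp] [a [b Hab]] [f Hf].
  exists (fun o => match o with None => p (a,a) | Some x => p (f x, b) end).
  intros [x|] [y|] E.
  - apply Hp in E. injection E; intros; f_equal; auto.
  - apply Hp in E. injection E; intros; congruence.
  - apply Hp in E. injection E; intros; congruence.
  - auto.
Qed.

Lemma wf_min (K : Type) (lt : K -> K -> Prop) : well_founded lt ->
  forall P : K -> Prop, (exists x, P x) -> exists x, P x /\ forall y, P y -> ~ lt y x.
Proof.
  intros wf P [x Px]. revert Px. induction (wf x) as [x _ IH]. intro Px.
  destruct (classic (exists y, P y /\ lt y x)) as [[y [Py Hy]]|N].
  - apply (IH y Hy Py).
  - exists x. split; auto. intros y Py Hy. apply N; eauto.
Qed.

Lemma surj_inv (A B : Type) (f : A -> B) : (forall y, exists x, f x = y) ->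
  exists g : B -> A, forall y, f (g y) = y.
Proof.
  intro H. exists (fun y => proj1_sig (cid (H y))). intro y. destruct (cid (H y)); auto.
Qed.

Lemma eq_card_sym_le (A B : Type) : eq_card A B -> le_card B A.
Proof.
  intros [f [_ Hs]]. destruct (surj_inv _ _ f Hs) as [g Hg]. exists g.
  intros x y E. rewrite <- (Hg x), <- (Hg y), E. auto.
Qed.

Lemma eq_card_le (A B : Type) : eq_card A B -> le_card A B.
Proof. intros [f [Hi _]]. exists f; auto. Qed.

Lemma sig_eq (A : Type) (P : A -> Prop) (x y : {a | P a}) : proj1_sig x = proj1_sig y -> x = y.
Proof.
  destruct x as [x Hx]; destruct y as [y Hy]; simpl; intro; subst. f_equal. apply proof_irrelevance.
Qed.

Lemma no_single (A T : Type) (t : T) : infinite A -> ~ le_card A {x | x = t}.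
Proof.
  intros [e He] [m Hm].
  assert (E : m (e 0) = m (e 1)) by (apply sig_eq; destruct (m (e 0)), (m (e 1)); simpl; congruence).
  apply Hm, He in E. discriminate.
Qed.

Theorem lemma3p5 (L K : Type) (ltK : K -> K -> Prop)
  (Theta : Type) (ltT : Theta -> Theta -> Prop) (Chi : Type) :
  infinite L ->
  is_succ_card L ltK ->
  regular_infinite_card ltT ->
  chi_ok Chi ->
  m_eq_lambda L Theta Chi ->
  forall d : K -> K -> L,
    in_J ltK Chi (fun alpha => in_A ltK d alpha /\ cf_eq ltK alpha Theta).
Proof.
  intros HLinf [Kwo [Kseg KnL]] [Tinf [Two [Treg Tcof]]] Chiok [[H [[Hsmall Hcov] [fH [fHi fHs]]]] _] d.
  destruct Kwo as [Kwf [Ktr [Kirr Ktri]]].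
  destruct Two as [Twf [Ttr [Tirr Ttri]]].
  assert (LL := hessenberg L HLinf).
  assert (LK : le_card L K).
  { destruct (card_compare L K) as [h|h]; auto. contradiction. }
  assert (KK : le_card (K*K) K).
  { apply hessenberg. exact (le_card_trans _ _ _ HLinf LK). }
  destruct (le_card_trans _ _ _ (le_card_prod _ _ _ _ (le_card_refl K) LK) KK) as [pi0 Hpi0].
  set (pi := fun (x : K) (j : L) => pi0 (x, j)).
  assert (piI : forall x j x' j', pi x j = pi x' j' -> x = x' /\ j = j').
  { intros x j x' j' E. apply Hpi0 in E. injection E; auto. }
  destruct HLinf as [eL HeL].
  assert (L2 : exists a b : L, a <> b).
  { exists (eL 0), (eL 1). intro E; apply HeL in E; discriminate. }
  set (l0 := eL 0).
  assert (Eex : exists E : K -> K -> L, forall x y y', ltK y x -> ltK y' x -> E x y = E x y' -> y = y').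
  { exists (fun x y => match excluded_middle_informative (ltK y x) with
              | left p => proj1_sig (cid (Kseg x)) (exist _ y p) | right _ => l0 end).
    intros x y y' Hy Hy'.
    destruct (excluded_middle_informative (ltK y x)) as [p|p]; [|tauto].
    destruct (excluded_middle_informative (ltK y' x)) as [p'|p']; [|tauto].
    destruct (cid (Kseg x)) as [phi Hphi]; simpl.
    intro E. apply Hphi in E. injection E; auto. }
  destruct Eex as [E HE].
  assert (leK_of_nlt : forall x y, ~ ltK y x -> le ltK x y).
  { intros x y N. destruct (Ktri x y) as [h|[h|h]]; unfold le; auto. contradiction. }
  assert (Bound : forall (A : Type), le_card A L -> forall s : A -> K, exists u, forall a, ltK (s a) u).
  { intros A HA s. apply NNPP. intro N.
    assert (N' : forall u, exists a, ~ ltK (s a) u).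
    { intro u. apply NNPP. intro N2. apply N. exists u. intro a. apply NNPP. intro N3. apply N2. eauto. }
    set (au := fun u => proj1_sig (cid (N' u))).
    assert (hau : forall u, le ltK u (s (au u))).
    { intro u. unfold au. destruct (cid (N' u)) as [a Ha]; simpl. auto. }
    apply KnL.
    assert (KAL : le_card K (A * option L)).
    { exists (fun u => (au u, match excluded_middle_informative (u = s (au u)) with
                              | left _ => None | right _ => Some (E (s (au u)) u) end)).
      intros u u' Eq. injection Eq; intros E2 E1. rewrite <- E1 in E2.
      destruct (excluded_middle_informative (u = s (au u))) as [h1|h1];
      destruct (excluded_middle_informative (u' = s (au u))) as [h2|h2]; try discriminate.
      - congruence.
      - injection E2; intro E3. apply (HE (s (au u))); auto.
        + destruct (hau u) as [h|h]; [congruence|auto].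
        + assert (hu' := hau u'). rewrite <- E1 in hu'. destruct hu' as [h|h]; [congruence|auto]. }
    eapply le_card_trans; [exact KAL|].
    eapply le_card_trans; [|exact LL].
    apply le_card_prod; auto. apply opt_le; auto. apply le_card_refl. }
  assert (SegL : forall g, le_card (option (option {x | ltK x g} * L)) L).
  { intro g. apply opt_le; auto. eapply le_card_trans; [|exact LL].
    apply le_card_prod; [|apply le_card_refl]. apply opt_le; auto. }
  assert (Nex : forall g, exists u, ltK g u /\ forall x j, le ltK x g -> ltK (pi x j) u).
  { intro g. destruct (Bound _ (SegL g) (fun o => match o with None => g
        | Some (None, j) => pi g j | Some (Some x, j) => pi (proj1_sig x) j end)) as [u Hu].
    exists u. split; [apply (Hu None)|]. intros x j [Hx|Hx].
    - subst x. apply (Hu (Some (None, j))).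
    - apply (Hu (Some (Some (exist _ x Hx), j))). }
  set (Nf := fun g => proj1_sig (cid (Nex g))).
  assert (Nf1 : forall g, ltK g (Nf g)). { intro g. unfold Nf. destruct (cid (Nex g)) as [u Hu]; simpl; apply Hu. }
  assert (Nf2 : forall g x j, le ltK x g -> ltK (pi x j) (Nf g)).
  { intros g x j. unfold Nf. destruct (cid (Nex g)) as [u Hu]; simpl; apply Hu. }
  set (C := fun a => forall x j, ltK x a -> ltK (pi x j) a).
  assert (Cclub : club ltK C).
  { split.
    - intro g. set (gam := fun n => Nat.iter n Nf g).
      destruct (Bound nat (ex_intro _ eL HeL) gam) as [u Hu].
      destruct (wf_min _ _ Kwf (fun u => forall n, ltK (gam n) u)) as [a [Ha Hmin]]; eauto.
      exists a. split.
      + intros x j Hx. assert (exists n, ~ ltK (gam n) x) as [n Hn].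
        { apply NNPP; intro N. apply (Hmin x); auto. intro n. apply NNPP. intro N2. apply N; eauto. }
        apply leK_of_nlt in Hn. eapply Ktr; [apply Nf2; exact Hn|]. apply (Ha (S n)).
      + right. apply (Ha 0).
    - intros a _ [_ Hs] x j Hx. destruct (Hs x Hx) as [y [[Cy ya] xy]].
      eapply Ktr; [apply Cy; exact xy|exact ya]. }
  set (Hf := fun j => proj1_sig (proj1_sig (cid (fHs j)))).
  assert (HfH : forall j, H (Hf j)).
  { intro j. unfold Hf. destruct (cid (fHs j)) as [[h Hh] Hp]; simpl; auto. }
  assert (HfE : forall h (Hh : H h), Hf (fH (exist _ h Hh)) = h).
  { intros h Hh. unfold Hf. destruct (cid (fHs (fH (exist _ h Hh)))) as [p Hp]; simpl.
    apply fHi in Hp. rewrite Hp. reflexivity. }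
  set (F := fun i b x => exists x0 j, pi x0 j = i /\ ltK x b /\ Hf j (d x0 b) (E b x)).
  assert (Chi0 : exists c : Chi, True).
  { destruct Chiok as [[f [_ Hs]]|[e _]].
    - destruct (Hs true) as [c _]; eauto.
    - exists (e 0); auto. }
  assert (Fsmall : forall i b, small_chi Chi (F i b)).
  { intros i b [c Hc]. destruct Chi0 as [c0 _].
    destruct (proj2_sig (c c0)) as [x0 [j [Hij _]]].
    apply (Hsmall (Hf j) (HfH j) (d x0 b)).
    assert (P : forall t, Hf j (d x0 b) (E b (proj1_sig (c t)))).
    { intro t. destruct (proj2_sig (c t)) as [x1 [j1 [Hij1 [_ Hh]]]].
      rewrite <- Hij in Hij1. apply piI in Hij1. destruct Hij1; subst; auto. }
    assert (Plt : forall t, ltK (proj1_sig (c t)) b).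
    { intro t. destruct (proj2_sig (c t)) as [x1 [j1 [_ [h _]]]]. auto. }
    exists (fun t => exist _ (E b (proj1_sig (c t))) (P t)).
    intros t t' Eq. apply (f_equal (@proj1_sig _ _)) in Eq. simpl in Eq.
    apply HE in Eq; auto. apply Hc.
    destruct (c t) as [ct Hct]; destruct (c t') as [ct' Hct']. simpl in Eq. subst.
    f_equal. apply proof_irrelevance. }
  exists C. split; [exact Cclub|]. exists F. split; [exact Fsmall|].
  assert (le_trans : forall x y z, le ltK x y -> le ltK y z -> le ltK x z).
  { intros x y z [h1|h1] [h2|h2]; subst; unfold le; eauto. }
  assert (lt_le : forall x y z, ltK x y -> le ltK y z -> ltK x z).
  { intros x y z h1 [h2|h2]; subst; eauto. }
  intros a [HA Hcf] HCa f Hreg B HB.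
  destruct (HA B HB) as [x0 [x0a [B' [B'B [B'cof B'inj]]]]].
  destruct Hcf as [[B0 [B0cof c0eq]] Hcf2].
  destruct c0eq as [c0 [c0i c0s]]. destruct (surj_inv _ _ c0 c0s) as [ci Hci].
  set (c := fun t => proj1_sig (ci t)).
  assert (cB0 : forall t, B0 (c t)). { intro t. unfold c. destruct (ci t); auto. }
  assert (csurj : forall b, B0 b -> exists t, c t = b).
  { intros b Hb. exists (c0 (exist _ b Hb)). unfold c.
    assert (E1 := Hci (c0 (exist _ b Hb))). apply c0i in E1. rewrite E1. reflexivity. }
  assert (ca : forall t, ltK (c t) a). { intro t. apply (proj1 B0cof), cB0. }
  assert (Tnomax : forall t, exists t', ltT t t').
  { intro t. apply NNPP; intro N. apply (no_single Theta Theta t Tinf).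
    destruct (Tcof (fun x => x = t)) as [m Hm].
    - intro g. exists t. split; auto. destruct (Ttri g t) as [h|[h|h]]; auto.
      exfalso; apply N; eauto.
    - exists m; auto. }
  assert (dense : forall x, ltK x a -> exists y, ltK x y /\ ltK y a).
  { intros x xa. apply NNPP; intro N. apply (no_single Theta K x Tinf).
    apply Hcf2. split.
    - intros b ->; auto.
    - intros g ga. exists x. split; auto. destruct (Ktri g x) as [h|[h|h]]; unfold le; auto.
      exfalso; apply N; eauto. }
  assert (bfex : forall t, exists b, B' b /\ forall s, le ltT s t -> le ltK (c s) b).
  { intro t. apply NNPP; intro N.
    assert (N' : forall b, B' b -> exists s, le ltT s t /\ ltK b (c s)).
    { intros b Hb. apply NNPP; intro N2. apply N. exists b. split; auto.
      intros s st. apply leK_of_nlt. intro h. apply N2; eauto. }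
    destruct (Tnomax t) as [t' tt'].
    destruct (Hcf2 (fun x => exists s, le ltT s t /\ c s = x)) as [m Hm].
    { split.
      - intros x [s [_ <-]]. apply ca.
      - intros g ga. destruct (proj2 B'cof g ga) as [b [Hb gb]].
        destruct (N' b Hb) as [s [st bs]]. exists (c s). split; eauto.
        right. destruct gb as [->|gb]; eauto. }
    apply (Treg t').
    set (sof := fun (x : {x | exists s, le ltT s t /\ c s = x}) => proj1_sig (cid (proj2_sig x))).
    assert (sof1 : forall x, ltT (sof x) t').
    { intro x. unfold sof. destruct (cid (proj2_sig x)) as [s [[->|h] h']]; simpl; eauto. }
    assert (sof2 : forall x, c (sof x) = proj1_sig x).
    { intro x. unfold sof. destruct (cid (proj2_sig x)) as [s [h' h]]; simpl; auto. }
    exists (fun t0 => exist _ (sof (m t0)) (sof1 (m t0))).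
    intros t1 t2 Eq. apply (f_equal (@proj1_sig _ _)) in Eq. simpl in Eq.
    apply Hm. apply sig_eq. rewrite <- !sof2. congruence. }
  set (bf := fun t => proj1_sig (cid (bfex t))).
  assert (bfB' : forall t, B' (bf t)). { intro t. unfold bf. destruct (cid (bfex t)) as [b [h h']]; auto. }
  assert (bfc : forall s t, le ltT s t -> le ltK (c s) (bf t)).
  { intros s t. unfold bf. destruct (cid (bfex t)) as [b [h' h]]; simpl; auto. }
  assert (bfa : forall t, ltK (bf t) a). { intro t. apply (proj1 B'cof), bfB'. }
  set (X := fun xi => exists t, d x0 (bf t) = xi).
  assert (Xeq : eq_card {xi | X xi} Theta).
  { apply CB.
    - exists (fun xi : {xi | X xi} => proj1_sig (@cid Theta (fun t => d x0 (bf t) = proj1_sig xi) (proj2_sig xi))).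
      intros u v Eq. apply sig_eq.
      destruct (@cid Theta (fun t => d x0 (bf t) = proj1_sig u) (proj2_sig u)) as [tu Hu];
      destruct (@cid Theta (fun t => d x0 (bf t) = proj1_sig v) (proj2_sig v)) as [tv Hv].
      simpl in Eq. subst. congruence.
    - destruct (Hcf2 (fun x => exists t, bf t = x)) as [m Hm].
      { split.
        - intros x [t <-]. apply bfa.
        - intros g ga. destruct (proj2 B0cof g ga) as [b0 [Hb0 gb0]].
          destruct (csurj b0 Hb0) as [s cs]. exists (bf s). split; eauto.
          apply (le_trans _ b0); auto. rewrite <- cs. apply bfc. left; auto. }
      assert (mX : forall t, X (d x0 (proj1_sig (m t)))).
      { intro t. destruct (proj2_sig (m t)) as [t1 Ht1]. exists t1. rewrite Ht1; auto. }
      exists (fun t => exist _ _ (mX t)).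
      intros t1 t2 Eq. apply (f_equal (@proj1_sig _ _)) in Eq. simpl in Eq.
      apply Hm. apply sig_eq. apply B'inj; auto.
      + destruct (proj2_sig (m t1)) as [u <-]. auto.
      + destruct (proj2_sig (m t2)) as [u <-]. auto. }
  set (gfun := fun xi => match excluded_middle_informative (X xi) with
                | left Hx => E (bf (proj1_sig (cid Hx))) (f (bf (proj1_sig (cid Hx))))
                | right _ => l0 end).
  assert (gprop : forall t, gfun (d x0 (bf t)) = E (bf t) (f (bf t))).
  { intro t. unfold gfun. destruct excluded_middle_informative as [Hx|Hx]; [|exfalso; apply Hx; exists t; auto].
    destruct (cid Hx) as [t' Ht']; simpl. apply B'inj in Ht'; auto. rewrite Ht'. reflexivity. }
  destruct (Hcov X gfun Xeq) as [h [Hh Yeq]].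
  destruct (eq_card_sym_le _ _ Yeq) as [iY iYI].
  set (j := fH (exist _ h Hh)).
  assert (Hj : Hf j = h) by apply HfE.
  exists (pi x0 j). split; [apply HCa; auto|].
  split.
  - intros b [Bb _]. right. apply (proj1 HB b Bb).
  - intros dl dla. apply NNPP; intro No.
    destruct (dense dl dla) as [dl' [dd' d'a]].
    destruct (proj2 B0cof dl' d'a) as [b0 [B0b0 db0]].
    destruct (csurj b0 B0b0) as [s cs].
    assert (dcs : ltK dl (c s)). { rewrite cs. eapply lt_le; eauto. }
    set (tY := fun t => proj1_sig (cid (proj1 (proj2_sig (iY t))))).
    assert (tYe : forall t, d x0 (bf (tY t)) = proj1_sig (iY t)).
    { intro t. unfold tY. destruct (cid (proj1 (proj2_sig (iY t)))) as [t1 Ht1]; simpl; auto. }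
    assert (tYs : forall t, ltT (tY t) s).
    { intro t. apply NNPP; intro N1.
      assert (st : le ltT s (tY t)).
      { destruct (Ttri s (tY t)) as [hh|[hh|hh]]; unfold le; auto. contradiction. }
      assert (dx : ltK dl (bf (tY t))) by (eapply lt_le; [exact dcs|apply bfc; exact st]).
      apply No. exists (bf (tY t)). split; [|exact dx]. split; [apply B'B, bfB'|].
      exists x0, j. split; [reflexivity|].
      destruct (Hreg (bf (tY t)) (bfa _)) as [_ [Hz|Hlt]].
      { exfalso. apply (Hz dl dx). }
      split; [exact Hlt|].
      rewrite Hj, <- gprop, tYe. exact (proj2 (proj2_sig (iY t))). }
    apply (Treg s).
    exists (fun t => exist _ (tY t) (tYs t)).
    intros t1 t2 Eq. apply (f_equal (@proj1_sig _ _)) in Eq. simpl in Eq.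
    apply iYI. apply sig_eq. rewrite <- !tYe. congruence.
Qed.
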